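(* For a nonzero real sequence $(\lambda_i)_{i\ge 0}$, let $\mathcal{H}_\lambda=\{\sum_i a_ix^i\in\mathbb{R}[x]:\sum_i a_i\lambda_i=0\}$. Among such hyperplanes with $\lambda_0=0$ and $\lambda_1\neq 0$, the ones that are closed under multiplication are exactly the following: (1) $\mathcal{H}_{\beta,\gamma}=\{p\in\mathbb{R}[x]: p(\beta)=p(\gamma)\}$ for real numbers $\beta\neq\gamma$; (2) $\mathcal{H}_\delta=\{p\in\mathbb{R}[x]: p'(\delta)=0\}$ for $\delta\in\mathbb{R}$; (3) $\mathcal{H}_{z,\bar z}=\{p\in\mathbb{R}[x]: p(z)=p(\bar z)\}=\{p\in\mathbb{R}[x]:\operatorname{Im}p(z)=0\}$ for $z\in\mathbb{C}\setminus\mathbb{R}$. *)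

(* Defs.v *)
From HB Require Import structures.
From mathcomp Require Import all_boot all_order all_algebra.
From mathcomp Require Import complex.
From mathcomp Require Import reals.
Set Implicit Arguments. Unset Strict Implicit. Unset Printing Implicit Defensive.
Import Order.TTheory GRing.Theory Num.Theory.
Local Open Scope ring_scope.

Definition Hlam (R : realType) (lam : nat -> R) : pred {poly R} :=
  fun p => \sum_(i < size p) p`_i * lam i == 0.

Definition mul_closed (R : realType) (H : pred {poly R}) : Prop :=
  forall p q, H p -> H q -> H (p * q).

Definition ceval (R : realType) (p : {poly R}) (z : R[i]) : R[i] :=
  (map_poly (real_complex R) p).[z].

(* Main.v *)
Require Import Defs.
From HB Require Import structures.
From mathcomp Require Import all_boot all_order all_algebra.
From mathcomp Require Import complex.
From mathcomp Require Import reals.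
From mathcomp Require Import ring lra.
Import Order.TTheory GRing.Theory Num.Theory.
Local Open Scope ring_scope.

Local Open Scope complex_scope.
Section S.
Variable (R : realType) (lam : nat -> R).
Definition Lf (p : {poly R}) := \sum_(i < size p) p`_i * lam i.

Lemma LfE (p : {poly R}) n : (size p <= n)%N -> Lf p = \sum_(i < n) p`_i * lam i.
Proof.
move=> h; rewrite /Lf -(subnKC h) big_split_ord /=.
rewrite [X in _ + X]big1 ?addr0 // => i _.
by rewrite nth_default ?mul0r // leq_addr.
Qed.

Lemma LfD (p q : {poly R}) : Lf (p + q) = Lf p + Lf q.
Proof.
rewrite (@LfE (p + q) (maxn (size p) (size q))) ?size_polyD //.
rewrite (@LfE p (maxn (size p) (size q))) ?leq_maxl //.
rewrite (@LfE q (maxn (size p) (size q))) ?leq_maxr //.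
rewrite -big_split /=; apply: eq_bigr => i _; by rewrite coefD mulrDl.
Qed.

Lemma LfZ c (p : {poly R}) : Lf (c *: p) = c * Lf p.
Proof.
rewrite (@LfE (c *: p) (size p)) ?size_scale_leq // /Lf mulr_sumr.
by apply: eq_bigr => i _; rewrite coefZ mulrA.
Qed.

Lemma Lf0 : Lf 0 = 0.
Proof. by rewrite /Lf size_poly0 big_ord0. Qed.

Lemma LfN (p : {poly R}) : Lf (- p) = - Lf p.
Proof. by rewrite -scaleN1r LfZ mulN1r. Qed.

Lemma LfB (p q : {poly R}) : Lf (p - q) = Lf p - Lf q.
Proof. by rewrite LfD LfN. Qed.

Lemma LfX n : Lf 'X^n = lam n.
Proof.
rewrite /Lf size_polyXn big_ord_recr /= big1 ?add0r => [|i _].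
  by rewrite coefXn eqxx mul1r.
by rewrite coefXn (ltn_eqF (ltn_ord i)) mul0r.
Qed.

Lemma Lf_sum (I : Type) (r : seq I) (F : I -> {poly R}) :
  Lf (\sum_(i <- r) F i) = \sum_(i <- r) Lf (F i).
Proof. exact: (big_morph Lf LfD Lf0). Qed.

Lemma Lf_small (p : {poly R}) : (size p <= 2)%N -> Lf p = p`_0 * lam 0 + p`_1 * lam 1.
Proof. by move=> h; rewrite (@LfE p 2 h) !big_ord_recr big_ord0 /= add0r. Qed.

Lemma small_poly (r : {poly R}) : (size r <= 2)%N -> r = (r`_0)%:P + (r`_1)%:P * 'X.
Proof.
move=> h; apply/polyP => i; rewrite coefD coefC coefCM coefX.
case: i => [|[|i]] /=; first by rewrite mulr0 addr0.
  by rewrite mulr1 add0r.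
by rewrite mulr0 addr0 nth_default // (leq_trans h).
Qed.

Lemma HlamE p : Hlam lam p = (Lf p == 0). Proof. by []. Qed.

Lemma LfCX c k : Lf (c%:P * 'X^k) = c * lam k.
Proof. by rewrite mul_polyC LfZ LfX. Qed.

Hypothesis h0 : lam 0 = 0.
Hypothesis h1 : lam 1 != 0.
Let mu k := lam k / lam 1.
Let s := mu 2.
Let t := mu 2 ^+ 2 - mu 3.
Let q : {poly R} := 'X^2 - s%:P * 'X + t%:P.

Lemma rec_lam : mul_closed (Hlam lam) -> forall n, lam n.+2 - s * lam n.+1 + t * lam n = 0.
Proof.
move=> hmc n.
have He k : Hlam lam ('X^k - (mu k)%:P * 'X).
  rewrite HlamE LfB LfX -(expr1 'X) LfCX /mu divfK //. by rewrite subrr.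
have := hmc _ _ (He 2%N) (He n).
rewrite HlamE.
set P := (_ * _)%R.
have -> : P = 'X^(n.+2) - (mu n)%:P * 'X^3 - (mu 2)%:P * 'X^(n.+1) + (mu 2 * mu n)%:P * 'X^2.
  rewrite /P; move: (mu 2) (mu n) => a b; rewrite polyCM !exprSr expr0; ring.
rewrite !LfD !LfN !LfCX !LfX => /eqP H.
rewrite -H /t /s /mu; field.
by [].
Qed.
Lemma Lf_qX (hr : forall n, lam n.+2 - s * lam n.+1 + t * lam n = 0) n :
  Lf (q * 'X^n) = 0.
Proof.
have -> : q * 'X^n = 1%:P * 'X^(n.+2) - s%:P * 'X^(n.+1) + t%:P * 'X^n.
  by rewrite /q; move: s t => a b; rewrite !exprSr expr0; ring.
by rewrite !LfD !LfN !LfCX mul1r.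
Qed.

Lemma Lf_qr (hr : forall n, lam n.+2 - s * lam n.+1 + t * lam n = 0) r :
  Lf (q * r) = 0.
Proof.
rewrite -[r]coefK poly_def mulr_sumr Lf_sum big1 // => i _.
by rewrite -scalerAr LfZ Lf_qX // mulr0.
Qed.

Lemma size_q : size q = 3.
Proof.
rewrite /q -addrA size_polyDl size_polyXn //.
have h1' : (size (s%:P * 'X)%R <= 2)%N.
  by rewrite (leq_trans (size_polyMleq _ _)) // size_polyC size_polyX; case: (s != 0).
have h2' : (size t%:P <= 1)%N by rewrite size_polyC leq_b1.
rewrite (leq_ltn_trans (size_polyD _ _)) // gtn_max size_polyN.
by apply/andP; split; [exact: h1' | exact: leq_trans h2' _].
Qed.

Lemma q_neq0 : q != 0.
Proof. by rewrite -size_poly_eq0 size_q. Qed.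

Lemma size_mod (p : {poly R}) : (size (p %% q)%R <= 2)%N.
Proof. by have := ltn_modp p q; rewrite q_neq0 size_q. Qed.

Lemma Lf_mod (hr : forall n, lam n.+2 - s * lam n.+1 + t * lam n = 0) (p : {poly R}) :
  Lf p = (p %% q)`_1 * lam 1.
Proof.
rewrite {1}(divp_eq p q) LfD mulrC Lf_qr // add0r Lf_small ?size_mod //.
by rewrite h0 mulr0 add0r.
Qed.

Lemma Hlam_mod (hr : forall n, lam n.+2 - s * lam n.+1 + t * lam n = 0) (p : {poly R}) :
  Hlam lam p <-> (p %% q)`_1 = 0.
Proof.
rewrite HlamE Lf_mod // mulf_eq0 (negbTE h1) orbF; split; [by move/eqP|by move=>->].
Qed.
Lemma ev_mod (p : {poly R}) x :
  p.[x] = (p %/ q).[x] * q.[x] + (p %% q)`_0 + (p %% q)`_1 * x.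
Proof.
by rewrite {1}(divp_eq p q) {1}(@small_poly (p %% q) (size_mod p)) !hornerE.
Qed.

Lemma q_root x : x ^+ 2 - s * x + t = 0 -> q.[x] = 0.
Proof. move=> H; by rewrite /q hornerD hornerC hornerD hornerN hornerXn hornerMX hornerC. Qed.

Lemma case_pos (hr : forall n, lam n.+2 - s * lam n.+1 + t * lam n = 0)
  (hD : 0 < s ^+ 2 - 4 * t) :
  exists beta gamma : R, beta != gamma /\
        forall p : {poly R}, Hlam lam p <-> p.[beta] = p.[gamma].
Proof.
set w := Num.sqrt (s ^+ 2 - 4 * t).
have w2 : w ^+ 2 = s ^+ 2 - 4 * t by rewrite sqr_sqrtr // ltW.
have wpos : 0 < w by rewrite sqrtr_gt0.
exists ((s + w) / 2), ((s - w) / 2); split.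
  by apply/eqP => E; move: wpos; lra.
move=> p; rewrite Hlam_mod // !(ev_mod p) !q_root; first last.
- rewrite -[t](_ : (s^+2 - w^+2)/4 = t); first by field.
  by rewrite w2; field.
- rewrite -[t](_ : (s^+2 - w^+2)/4 = t); first by field.
  by rewrite w2; field.
rewrite !mulr0 !add0r.
set r1 := (p %% q)`_1; set r0 := (p %% q)`_0.
split; first by move=> ->; rewrite !mul0r.
move=> E.
have : r1 * w = 0 by have := E; move: r1 r0 w {w2 wpos E} => a b c; nra.
by move/eqP; rewrite mulf_eq0 (gt_eqF wpos) orbF => /eqP.
Qed.
Lemma case_zero (hr : forall n, lam n.+2 - s * lam n.+1 + t * lam n = 0)
  (hD : s ^+ 2 - 4 * t = 0) :
  exists delta : R, forall p : {poly R}, Hlam lam p <-> (p^`()).[delta] = 0.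
Proof.
exists (s / 2).
have qE : q = ('X - (s/2)%:P) * ('X - (s/2)%:P).
  have key a : 'X^2 - (a + a)%:P * 'X + (a * a)%:P = ('X - a%:P) * ('X - a%:P) :> {poly R}.
    by rewrite polyCD polyCM; ring.
  have e2 : t = (s/2) * (s/2).
    have -> : t = s^+2 / 4 by rewrite -[t](_ : (s^+2 - (s^+2 - 4*t))/4 = t); [rewrite hD; field | field].
    by field.
  have e1 : s = s/2 + s/2 by field.
  by rewrite -key -e1 -e2.
move=> p; rewrite Hlam_mod //.
have -> : (p^`()).[s/2] = (p %% q)`_1.
  rewrite {1}(divp_eq p q) {1}(@small_poly (p %% q) (size_mod p)) qE.
  rewrite !derivE !(hornerD, hornerN, hornerM, hornerC, hornerX) subrr.
  ring.
by [].
Qed.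
Lemma cevalD (p1 p2 : {poly R}) z : ceval (p1 + p2) z = ceval p1 z + ceval p2 z.
Proof. by rewrite /ceval rmorphD hornerD. Qed.
Lemma cevalM (p1 p2 : {poly R}) z : ceval (p1 * p2) z = ceval p1 z * ceval p2 z.
Proof. by rewrite /ceval rmorphM hornerM. Qed.
Lemma cevalC (c : R) z : ceval c%:P z = c%:C.
Proof. by rewrite /ceval map_polyC hornerC. Qed.
Lemma cevalN (p1 : {poly R}) z : ceval (- p1) z = - ceval p1 z.
Proof. by rewrite /ceval rmorphN hornerN. Qed.
Lemma cevalX z : ceval ('X : {poly R}) z = z.
Proof. by rewrite /ceval map_polyX hornerX. Qed.

Lemma cev_mod (p : {poly R}) (z : R[i]) :
  ceval p z = ceval (p %/ q) z * ceval q z + ((p %% q)`_0)%:C + ((p %% q)`_1)%:C * z.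
Proof.
rewrite {1}(divp_eq p q) {1}(@small_poly (p %% q) (size_mod p)).
by rewrite cevalD cevalM cevalD cevalC cevalM cevalC cevalX addrA.
Qed.

Lemma case_neg (hr : forall n, lam n.+2 - s * lam n.+1 + t * lam n = 0)
  (hD : s ^+ 2 - 4 * t < 0) :
  exists z : R[i], complex.Im z != 0 /\
        forall p : {poly R}, Hlam lam p <-> ceval p z = ceval p (conjc z).
Proof.
set w := Num.sqrt (4 * t - s ^+ 2).
have w2 : w ^+ 2 = 4 * t - s ^+ 2 by rewrite sqr_sqrtr //; lra.
have wpos : 0 < w by rewrite sqrtr_gt0; lra.
have qz (a b : R) : a = s / 2 -> b ^+ 2 = w ^+ 2 / 4 -> ceval q (Complex a b) = 0.
  move=> -> eb; rewrite /q cevalD cevalC cevalD cevalN cevalM cevalC cevalX expr2 cevalM cevalX.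
  apply/eqP; rewrite eq_complex /=; apply/andP; split; apply/eqP.
    by move: eb; rewrite w2 !expr2 => eb; rewrite eb; field.
  by field.
exists (@Complex R (s / 2) (w / 2)).
split.
  by rewrite /=; apply/eqP => E; move: wpos; lra.
move=> p; rewrite Hlam_mod // !(cev_mod p) !qz //; try by rewrite ?sqrrN; field.
rewrite !mulr0 !add0r.
set r1 := (p %% q)`_1; set r0 := (p %% q)`_0.
split; first by move=> ->; rewrite !mul0r.
move/eqP; rewrite eq_complex /= => /andP [_ /eqP E].
have : r1 * w = 0 by move: E; move: r1 r0 w {w2 wpos qz} => a b c; lra.
by move/eqP; rewrite mulf_eq0 (gt_eqF wpos) orbF => /eqP.
Qed.
End S.

Local Close Scope complex_scope.
Theorem lemma4p13 (R : realType) (lam : nat -> R)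
  (hnz : exists i, lam i != 0) (h0 : lam 0%N = 0) (h1 : lam 1%N != 0) :
  mul_closed (Hlam lam) <->
  [\/ exists beta gamma : R, beta != gamma /\
        forall p : {poly R}, Hlam lam p <-> p.[beta] = p.[gamma],
      exists delta : R,
        forall p : {poly R}, Hlam lam p <-> (p^`()).[delta] = 0
    | exists z : R[i], complex.Im z != 0 /\
        forall p : {poly R}, Hlam lam p <-> ceval p z = ceval p (conjc z)].
Proof.
split.
- move=> hmc; have hr := rec_lam R lam h1 hmc.
  case: (ltgtP ((lam 2%N / lam 1%N) ^+ 2 - 4 * ((lam 2%N / lam 1%N) ^+ 2 - lam 3%N / lam 1%N)) 0) => hD.
  + by apply: Or33; exact: (case_neg R lam h0 h1 hr hD).
  + by apply: Or31; exact: (case_pos R lam h0 h1 hr hD).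
  + by apply: Or32; exact: (case_zero R lam h0 h1 hr hD).
- case=> [[b [g [_ H]]] | [d H] | [z [_ H]]] p1 p2 /H hp /H hq; apply/H.
  + by rewrite !hornerM hp hq.
  + by rewrite derivM hornerD !hornerM hp hq mulr0 mul0r addr0.
  + by rewrite !cevalM hp hq.
Qed.
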